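(* Let $D$ be a squarefree integer and let $p>3$ be a prime dividing $D$. Then $C_D(\mathbb{Q}_p)\neq\emptyset$ if and only if $p\equiv1\pmod{24}$.
   Context: $C_D\subset\mathbb{P}^4$ is the curve over $\mathbb{Q}$ given by $X_0^2-2X_1^2+X_2^2=0$, $X_1^2-2X_2^2+DX_3^2=0$, $X_2^2-2DX_3^2+X_4^2=0$. *)

(* Defs.v *)
From mathcomp Require Import all_boot all_order all_algebra.
Set Implicit Arguments. Unset Strict Implicit. Unset Printing Implicit Defensive.
Import Order.TTheory GRing.Theory Num.Theory.
Local Open Scope ring_scope.

(* p-adic integers Z_p modelled as the inverse limit of Z/p^k Z:
   a sequence of integers a k (representing a residue mod p^k)
   with a (k+1) = a k mod p^k. *)
Definition padic_int (p : nat) (a : nat -> int) : Prop :=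
  forall k : nat, (a k.+1 = a k %[mod (p ^ k)%:Z])%Z.

Definition CD_eq1 (D x0 x1 x2 x3 x4 : int) : int := x0^+2 - 2 * x1^+2 + x2^+2.
Definition CD_eq2 (D x0 x1 x2 x3 x4 : int) : int := x1^+2 - 2 * x2^+2 + D * x3^+2.
Definition CD_eq3 (D x0 x1 x2 x3 x4 : int) : int := x2^+2 - 2 * D * x3^+2 + x4^+2.

(* Every point of
   P^4(Q_p) has a primitive representative in Z_p^5 (some coordinate a unit),
   and the equations hold in Z_p iff they hold mod p^k for every k. *)
Definition CD_has_Qp_point (D : int) (p : nat) : Prop :=
  exists x0 x1 x2 x3 x4 : nat -> int,
    [/\ padic_int p x0, padic_int p x1, padic_int p x2, padic_int p x3
      & padic_int p x4] /\
    ~ [/\ (p%:Z %| x0 1%N)%Z, (p%:Z %| x1 1%N)%Z, (p%:Z %| x2 1%N)%Z,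
          (p%:Z %| x3 1%N)%Z & (p%:Z %| x4 1%N)%Z] /\
    forall k : nat,
      [/\ ((p ^ k)%:Z %| CD_eq1 D (x0 k) (x1 k) (x2 k) (x3 k) (x4 k))%Z,
          ((p ^ k)%:Z %| CD_eq2 D (x0 k) (x1 k) (x2 k) (x3 k) (x4 k))%Z &
          ((p ^ k)%:Z %| CD_eq3 D (x0 k) (x1 k) (x2 k) (x3 k) (x4 k))%Z].

Definition squarefree_int (D : int) : Prop :=
  forall q : nat, prime q -> ~~ (q ^ 2 %| `|D|)%N.

(* Main.v *)
Require Import Defs.
From mathcomp Require Import all_boot all_order all_algebra all_fingroup all_solvable all_field ring zify.
Import Order.TTheory GRing.Theory Num.Theory.
Local Open Scope ring_scope.

Lemma PoszX (p n : nat) : ((p ^ n)%N)%:Z = (p%:Z) ^+ n.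
Proof. by elim: n => // n IH; rewrite expnS PoszM IH exprS. Qed.

Fixpoint hseq (r a t : int) (k : nat) : int :=
  match k with
  | 0 => r
  | k'.+1 => let x := hseq r a t k' in x - (x ^+ 2 - a) * t
  end.

Lemma hensel (p : nat) (a r : int) : prime p -> (p%:Z %| r ^+ 2 - a)%Z ->
  ~~ (p%:Z %| 2 * r)%Z ->
  exists s : nat -> int, padic_int p s /\
    forall k, ((p ^ k)%:Z %| s k ^+ 2 - a)%Z.
Proof.
move=> pr hr h2r.
have cop : coprimez p (2 * r).
  by rewrite coprimezE prime_coprime // -dvdzE.
have [u [t ht]] := Bezoutz p (2 * r).
move: cop; rewrite /coprimez => /eqP cop; rewrite cop in ht.
have ht' : (p%:Z %| 2 * r * t - 1)%Z.
  have -> : 2 * r * t - 1 = 2 * r * t - (u * p + t * (2 * r)) by rewrite ht.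
  have -> : 2 * r * t - (u * p + t * (2 * r)) = - (u * p) by ring.
  by rewrite rpredN dvdz_mull.
have inv k : ((p ^ k.+1)%:Z %| hseq r a t k ^+ 2 - a)%Z /\
             (p%:Z %| hseq r a t k - r)%Z.
  elim: k => [|k [IH1 IH2]] /=; first by rewrite expn1 hr subrr dvdz0.
  set x := hseq r a t k in IH1 IH2 *.
  set e := x ^+ 2 - a in IH1 *.
  have pe : (p%:Z %| e)%Z.
    by apply: dvdz_trans IH1; rewrite PoszX dvdz_exp.
  split; last first.
    have -> : x - e * t - r = (x - r) - e * t by ring.
    by rewrite rpredB // dvdz_mulr.
  have -> : (x - e * t) ^+ 2 - a = e * (1 - 2 * x * t) + t ^+ 2 * (e * e).
    by rewrite /e; ring.
  apply: rpredD.
    rewrite expnS mulnC PoszM; apply: dvdz_mul => //.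
    have -> : 1 - 2 * x * t = - (2 * r * t - 1) - 2 * t * (x - r) by ring.
    by rewrite rpredB ?rpredN // dvdz_mull.
  apply: dvdz_mull; apply: dvdz_trans (dvdz_mul IH1 IH1).
  by rewrite -PoszM -expnD PoszX PoszX dvdz_exp2l //; lia.
exists (hseq r a t); split.
  move=> k; apply/eqP; rewrite eqz_mod_dvd /=.
  have -> : hseq r a t k - (hseq r a t k ^+ 2 - a) * t - hseq r a t k =
    - ((hseq r a t k ^+ 2 - a) * t) by ring.
  rewrite rpredN dvdz_mulr //; apply: dvdz_trans (proj1 (inv k)).
  by rewrite !PoszX dvdz_exp2l.
move=> k; apply: dvdz_trans (proj1 (inv k)).
by rewrite !PoszX dvdz_exp2l.
Qed.
Section Fp.
Variable p : nat.
Hypothesis pr : prime p.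
Hypothesis p3 : (3 < p)%N.
Local Notation F := 'F_p.

Lemma Fp_natn0 n : (0 < n)%N -> (n < p)%N -> n%:R != 0 :> F.
Proof.
move=> n0 np; rewrite -(dvdn_pcharf (pchar_Fp pr)); apply/negP=> /dvdn_leq.
move=> /(_ n0); lia.
Qed.

Lemma Fp_fermat (x : F) : x != 0 -> x ^+ p.-1 = 1.
Proof.
move=> x0; have := expf_card x; rewrite card_Fp //.
move=> h.
have hp : (p.-1).+1 = p by rewrite prednK // prime_gt0.
have : x ^+ (p.-1).+1 = x by rewrite hp.
by rewrite exprS => h2; apply: (mulfI x0); rewrite h2 mulr1.
Qed.

Lemma Fp_order (x : F) m : x != 0 -> m.-primitive_root x -> (m %| p.-1)%N.
Proof. by move=> x0 pm; rewrite (prim_order_dvd pm) Fp_fermat. Qed.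

Lemma sq_to_24 (a b c : F) : a ^+ 2 = -1 -> b ^+ 2 = 2 -> c ^+ 2 = 3 ->
  p = 1 %[mod 24].
Proof.
move=> ha hb hc.
have two0 : (2%:R : F) != 0 by apply: Fp_natn0; lia.
have b0 : b != 0 by apply: contraNneq two0 => b0; rewrite -hb b0 expr0n.
set z := (1 + a) / b.
have hz2 : z ^+ 2 = a.
  rewrite /z expr_div_n hb.
  have -> : (1 + a) ^+ 2 = 1 + 2 * a + a ^+ 2 by ring.
  by rewrite ha; field.
have z0 : z != 0 by apply: contraNneq two0 => z0; move: hz2; rewrite z0 expr0n /= => a0;
  move: ha; rewrite -a0 expr0n /= => /eqP; rewrite eq_sym oppr_eq0 oner_eq0.
have hz8 : z ^+ 8 = 1 by rewrite (exprM z 2 4) hz2 (exprM a 2 2) ha; ring.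
have hz4 : z ^+ 4 != 1.
  rewrite (exprM z 2 2) hz2 ha; apply/eqP => /eqP; rewrite -subr_eq0.
  have -> : (-1 - 1 : F) = - 2%:R by ring.
  by rewrite oppr_eq0 (negbTE two0).
have [m pm m8] := prim_order_exists (isT : (0 < 8)%N) hz8.
have m4 : ~~ (m %| 4)%N by rewrite (prim_order_dvd pm).
have mp := @Fp_order z m z0 pm.
have h8 : (8 %| p.-1)%N.
  have : (m <= 8)%N by apply: dvdn_leq.
  move: m8 m4 mp; case: m {pm} => [|[|[|[|[|[|[|[|[|m]]]]]]]]] //.
set x := a * c.
have hx : x ^+ 2 = -3 by rewrite /x exprMn ha hc; ring.
set w := (-1 + x) / 2.
have hw3 : w ^+ 3 = 1.
  rewrite /w expr_div_n.
  have -> : (-1 + x) ^+ 3 = -1 + 3 * x - 3 * x ^+ 2 + x * x ^+ 2 by ring.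
  rewrite hx; field. have -> : (8 : F) = 2 * 2 * 2 by ring. by rewrite !mulf_neq0.
have hw1 : w ^+ 1 != 1.
  rewrite expr1; apply/eqP => hw.
  have ex : x = 2 * w + 1 by rewrite /w; field.
  rewrite hw in ex.
  have : (x ^+ 2 = 9) by rewrite ex; ring.
  rewrite hx => /eqP; rewrite -subr_eq0.
  have -> : (-3 - 9 : F) = - (3%:R * 2%:R * 2%:R) by ring.
  have n3 := @Fp_natn0 3 isT p3.
  by rewrite oppr_eq0 !mulf_eq0 (negbTE n3) (negbTE two0).
have w0 : w != 0 by apply/eqP => w0; move: hw3; rewrite w0 expr0n /= => /eqP; rewrite eq_sym oner_eq0.
have [m' pm' m3] := prim_order_exists (isT : (0 < 3)%N) hw3.
have m1 : ~~ (m' %| 1)%N by rewrite (prim_order_dvd pm').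
have mp' := @Fp_order w m' w0 pm'.
have h3 : (3 %| p.-1)%N.
  have : (m' <= 3)%N by apply: dvdn_leq.
  move: m3 m1 mp'; case: m' {pm'} => [|[|[|[|mm]]]] //.
have : (24 %| p.-1)%N by rewrite (@Gauss_dvd 8 3) ?h8 ?h3.
case/dvdnP => k hk.
have hp : p = (p.-1).+1 by rewrite prednK // prime_gt0.
by rewrite hp hk -addn1 modnMDl.
Qed.

Lemma Fp_prim24 : p = 1 %[mod 24] -> exists z : F, 24.-primitive_root z.
Proof.
move=> h24.
have d24 : (24 %| p.-1)%N.
  by apply/dvdnP; exists (p %/ 24)%N; move: h24; lia.
set rs := enum [pred x : F | x != 0].
have : has (p.-1).-primitive_root rs.
  apply: has_prim_root.
  - by rewrite -ltnS prednK ?prime_gt0 //; lia.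
  - by apply/allP => x; rewrite mem_enum inE => x0; apply/unity_rootP; apply: Fp_fermat.
  - exact: enum_uniq.
  rewrite -cardE.
  have := cardC1 (0 : F); rewrite card_Fp // => hc.
  have -> : #|[pred x : F | x != 0]| = #|predC1 (0 : F)| by apply: eq_card.
  by rewrite hc.
case/hasP => g _ pg.
by exists (g ^+ (p.-1 %/ 24)%N); apply: dvdn_prim_root.
Qed.

Lemma Fp_sqrts : p = 1 %[mod 24] ->
  exists a b c : F, [/\ a ^+ 2 = -1, b ^+ 2 = 2 & c ^+ 2 = 3].
Proof.
move=> /Fp_prim24 [z pz].
have zmod n : z ^+ n = z ^+ (n %% 24) by rewrite (prim_expr_mod pz).
have z12 : z ^+ 12 = -1.
  have h : (z ^+ 12 - 1) * (z ^+ 12 + 1) = 0.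
    have -> : (z ^+ 12 - 1) * (z ^+ 12 + 1) = z ^+ 24 - 1.
      by rewrite (exprM z 12 2); ring.
    by rewrite (prim_expr_order pz) subrr.
  move/eqP: h; rewrite mulf_eq0 subr_eq0 -(prim_order_dvd pz) /= addr_eq0 => /eqP //.
have z8 : z ^+ 8 != 1 by rewrite -(prim_order_dvd pz).
set w := z ^+ 8.
have w3 : w ^+ 3 = 1 by rewrite -exprM (prim_expr_order pz).
have w2 : w ^+ 2 + w + 1 = 0.
  have : (w - 1) * (w ^+ 2 + w + 1) = 0.
    have -> : (w - 1) * (w ^+ 2 + w + 1) = w ^+ 3 - 1 by ring.
    by rewrite w3 subrr.
  by move/eqP; rewrite mulf_eq0 subr_eq0 (negbTE z8) /= => /eqP.
exists (z ^+ 6), (z ^+ 3 + z ^+ 21), (z ^+ 6 * (2 * w + 1)); split.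
- by rewrite -z12; ring.
- have -> : (z ^+ 3 + z ^+ 21) ^+ 2 = z ^+ 6 + 2 * z ^+ 24 + z ^+ 12 * z ^+ 30.
    by ring.
  by rewrite (zmod 30) /= (prim_expr_order pz) z12; ring.
- have -> : (z ^+ 6 * (2 * w + 1)) ^+ 2 = z ^+ 12 * (2 * w + 1) ^+ 2 by ring.
  rewrite z12.
  have -> : (2 * w + 1) ^+ 2 = 4 * (w ^+ 2 + w + 1) - 3 by ring.
  by rewrite w2; ring.
Qed.


Lemma Fp_lift (a : F) : exists r : int, r%:~R = a.
Proof. by exists (nat_of_ord a)%:Z; rewrite -pmulrn natr_Zp. Qed.

Lemma Fp_dvd (n : int) : (p%:Z %| n)%Z = ((n%:~R : F) == 0).
Proof. by rewrite (dvdz_pcharf (pchar_Fp pr)). Qed.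

Lemma sqrt_seq (a : F) (n : int) : a ^+ 2 = n%:~R -> a != 0 ->
  exists s : nat -> int, padic_int p s /\
    forall k, ((p ^ k)%:Z %| s k ^+ 2 - n)%Z.
Proof.
move=> ha a0; have [r hr] := Fp_lift a.
apply: (@hensel p n r) => //.
  by rewrite Fp_dvd rmorphB /= rmorphM /= hr -expr2 ha subrr.
rewrite Fp_dvd rmorphM /= hr rmorph_nat mulf_eq0 negb_or a0 andbT.
by apply: Fp_natn0; lia.
Qed.

End Fp.

Lemma padic_dvd1 (p : nat) (x : nat -> int) : padic_int p x ->
  (p%:Z %| x 1%N)%Z = (p%:Z %| x 2%N)%Z.
Proof.
move=> hx; have := hx 1%N; move/eqP; rewrite eqz_mod_dvd expn1 => h.
have -> : x 2%N = x 1%N + (x 2%N - x 1%N) by ring.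
apply/idP/idP => [h1|h2]; first by rewrite rpredD.
have -> : x 1%N = (x 1%N + (x 2%N - x 1%N)) - (x 2%N - x 1%N) by ring.
by rewrite rpredB.
Qed.

Local Close Scope ring_scope.

Theorem lemma4p5 (D : int) (p : nat) :
  squarefree_int D -> prime p -> (3 < p)%N -> (p %| `|D|)%N ->
  (CD_has_Qp_point D p <-> p = 1 %[mod 24]).
Proof.
Local Open Scope ring_scope.
move=> sqD pr p3 pD; split.
- case=> [x0 [x1 [x2 [x3 [x4 [[h0 h1 h2 h3 h4] [hprim heq]]]]]]].
  have [e1 e2 e3] := heq 2%N.
  rewrite (@padic_dvd1 _ _ h0) (@padic_dvd1 _ _ h1) (@padic_dvd1 _ _ h2) (@padic_dvd1 _ _ h3)
    (@padic_dvd1 _ _ h4) in hprim.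
  move: e1 e2 e3 hprim.
  set y0 := x0 2%N; set y1 := x1 2%N; set y2 := x2 2%N; set y3 := x3 2%N;
    set y4 := x4 2%N.
  move=> e1 e2 e3 hprim.
  have pp2 : ((p%:Z) %| (p ^ 2)%:Z)%Z by rewrite PoszX dvdz_exp.
  have f1 := dvdz_trans pp2 e1; have f2 := dvdz_trans pp2 e2;
    have f3 := dvdz_trans pp2 e3.
  rewrite Fp_dvd // /CD_eq1 !rmorphD !rmorphN !rmorphM /= rmorph_nat in f1.
  rewrite Fp_dvd // /CD_eq2 !rmorphD !rmorphN !rmorphM /= rmorph_nat in f2.
  rewrite Fp_dvd // /CD_eq3 !rmorphD !rmorphN !rmorphM /= rmorph_nat in f3.
  have D0 : (D%:~R : 'F_p) = 0%R by apply/eqP; rewrite -Fp_dvd // dvdzE.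
  rewrite D0 in f2 f3.
  move: f1 f2 f3.
  set Y0 := (y0%:~R : 'F_p); set Y1 := (y1%:~R : 'F_p); set Y2 := (y2%:~R : 'F_p);
    set Y4 := (y4%:~R : 'F_p).
  move=> /eqP f1 /eqP f2 /eqP f3.
  have [Y20|Y2n0] := eqVneq Y2 0%R.
    exfalso; apply: hprim.
    have Y10 : Y1 = 0%R.
      by apply/eqP; rewrite -(sqrf_eq0 Y1); apply/eqP; rewrite -f2 Y20; ring.
    have Y00 : Y0 = 0%R.
      by apply/eqP; rewrite -(sqrf_eq0 Y0); apply/eqP; rewrite -f1 Y20 Y10; ring.
    have Y40 : Y4 = 0%R.
      by apply/eqP; rewrite -(sqrf_eq0 Y4); apply/eqP; rewrite -f3 Y20; ring.
    have d0 : (p%:Z %| y0)%Z by rewrite Fp_dvd // -/Y0 Y00.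
    have d1 : (p%:Z %| y1)%Z by rewrite Fp_dvd // -/Y1 Y10.
    have d2 : (p%:Z %| y2)%Z by rewrite Fp_dvd // -/Y2 Y20.
    have d4 : (p%:Z %| y4)%Z by rewrite Fp_dvd // -/Y4 Y40.
    split => //.
    have sq z : (p%:Z %| z)%Z -> ((p ^ 2)%:Z %| z * z)%Z.
      by move=> hz; rewrite PoszX expr2; apply: dvdz_mul.
    have hD : ((p ^ 2)%:Z %| D * (y3 * y3))%Z.
      have -> : (D * (y3 * y3) = CD_eq2 D y0 y1 y2 y3 y4 - y1 * y1 + 2 * (y2 * y2))%R.
        by rewrite /CD_eq2; ring.
      by rewrite rpredD ?rpredB ?sq // dvdz_mull ?sq.
    rewrite dvdzE abszM abszM /= in hD.
    case/dvdnP: pD => d hd; rewrite hd in hD.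
    have pd : ~~ (p %| d)%N.
      apply: contra (sqD p pr); rewrite hd => /dvdnP [e ->].
      by apply/dvdnP; exists e; rewrite expnS expn1 !mulnA.
    have : (p %| d * (`|y3| * `|y3|))%N.
      move: hD; rewrite (_ : (p ^ 2 = p * p)%N); last by rewrite expnS expn1.
      by rewrite -mulnA -(mulnCA p) dvdn_pmul2l // prime_gt0.
    rewrite !Euclid_dvdM // (negbTE pd) orbb => hy3.
    by rewrite dvdzE.
  have g1 : (Y0 ^+ 2 - 2 * Y1 ^+ 2 + Y2 ^+ 2 = 0)%R by apply: etrans f1; ring.
  have g2 : (Y1 ^+ 2 - 2 * Y2 ^+ 2 = 0)%R by apply: etrans f2; ring.
  have g3 : (Y2 ^+ 2 + Y4 ^+ 2 = 0)%R by apply: etrans f3; ring.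
  have k1 : (Y1 ^+ 2 = 2 * Y2 ^+ 2)%R.
    by rewrite -[Y1 ^+ 2]subr0 -g2; ring.
  apply: (@sq_to_24 p pr p3 (Y4 / Y2) (Y1 / Y2) (Y0 / Y2)).
  + rewrite expr_div_n.
    have -> : (Y4 ^+ 2 = (Y2 ^+ 2 + Y4 ^+ 2) - Y2 ^+ 2)%R by ring.
    by rewrite g3; field.
  + by rewrite expr_div_n k1; field.
  + rewrite expr_div_n.
    have -> : (Y0 ^+ 2 = (Y0 ^+ 2 - 2 * Y1 ^+ 2 + Y2 ^+ 2) + 2 * Y1 ^+ 2 - Y2 ^+ 2)%R by ring.
    by rewrite g1 k1; field.
- move=> h24; have [a [b [c [ha hb hc]]]] := @Fp_sqrts p pr p3 h24.
  have n0 (u : 'F_p) (n : int) : (u ^+ 2 = n%:~R)%R -> (n%:~R : 'F_p) != 0%R -> u != 0%R.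
    by move=> hu; apply: contraNneq => u0; rewrite -hu u0 expr0n.
  have two0 : (2%:R : 'F_p) != 0%R by apply: Fp_natn0 => //; lia.
  have three0 : (3%:R : 'F_p) != 0%R by apply: Fp_natn0 => //; lia.
  have [s4 [ps4 hs4]] : exists s, padic_int p s /\ forall k, ((p ^ k)%:Z %| (s k ^+ 2 - (-1)))%Z.
    apply: (@sqrt_seq p pr p3 a); first by rewrite ha ?rmorphN ?rmorph1.
    apply/eqP => a0; move: ha; rewrite a0 expr0n /= => /eqP.
    by rewrite eq_sym oppr_eq0 oner_eq0.
  have [s1 [ps1 hs1]] : exists s, padic_int p s /\ forall k, ((p ^ k)%:Z %| (s k ^+ 2 - 2))%Z.
    apply: (@sqrt_seq p pr p3 b); first by rewrite hb ?rmorph_nat.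
    apply/eqP => b0; move: hb; rewrite b0 expr0n /= => /eqP.
    by rewrite eq_sym (negbTE two0).
  have [s0 [ps0 hs0]] : exists s, padic_int p s /\ forall k, ((p ^ k)%:Z %| (s k ^+ 2 - 3))%Z.
    apply: (@sqrt_seq p pr p3 c); first by rewrite hc ?rmorph_nat.
    apply/eqP => c0; move: hc; rewrite c0 expr0n /= => /eqP.
    by rewrite eq_sym (negbTE three0).
  exists s0, s1, (fun=> 1%R), (fun=> 0%R), s4; split; first by split.
  split.
    case=> _ _ h _ _; move: h; rewrite dvdzE /= dvdn1 => /eqP p1.
    by move: p3; rewrite p1.
  move=> k; split.
  + have -> : (CD_eq1 D (s0 k) (s1 k) 1 0 (s4 k) = (s0 k ^+ 2 - 3) - 2 * (s1 k ^+ 2 - 2))%R.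
      by rewrite /CD_eq1; ring.
    by rewrite rpredB ?dvdz_mull.
  + have -> : (CD_eq2 D (s0 k) (s1 k) 1 0 (s4 k) = s1 k ^+ 2 - 2)%R.
      by rewrite /CD_eq2; ring.
    exact: hs1.
  + have -> : (CD_eq3 D (s0 k) (s1 k) 1 0 (s4 k) = s4 k ^+ 2 - (-1))%R.
      by rewrite /CD_eq3; ring.
    exact: hs4.
Qed.
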